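(* Every connected door space $X$ satisfies OCC; that is, there do not exist pairwise disjoint nonempty subsets $A,B,C,D$ of $X$ such that $A$ and $B$ are open and $C$ and $D$ are closed.
   Context: A topological space $(X,\mathcal{T})$ is a connected door space if every proper nonempty subset of $X$ (i.e. every $A$ with $\varnothing\ne A\subsetneq X$) is either open or closed, but not both. A space satisfies OCC (the open-closed condition) if there are no pairwise disjoint nonempty subsets $A,B,C,D$ with $A,B$ open and $C,D$ closed. *)

(* Defs.v *)
From Stdlib Require Import Classical.

Set Implicit Arguments.

Record topology (X : Type) : Type := {
  is_open : (X -> Prop) -> Prop;
  open_empty : is_open (fun _ => False);
  open_full : is_open (fun _ => True);
  open_inter : forall U V, is_open U -> is_open V ->
                 is_open (fun x => U x /\ V x);
  open_union : forall (F : (X -> Prop) -> Prop),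
                 (forall U, F U -> is_open U) ->
                 is_open (fun x => exists U, F U /\ U x)
}.

Definition is_closed (X : Type) (T : topology X) (A : X -> Prop) : Prop :=
  is_open T (fun x => ~ A x).

Definition nonempty (X : Type) (A : X -> Prop) : Prop := exists x, A x.

Definition proper_subset (X : Type) (A : X -> Prop) : Prop := exists x, ~ A x.

Definition disjoint (X : Type) (A B : X -> Prop) : Prop :=
  forall x, A x -> B x -> False.

Definition connected_door_space (X : Type) (T : topology X) : Prop :=
  forall A : X -> Prop, nonempty A -> proper_subset A ->
    (is_open T A \/ is_closed T A) /\ ~ (is_open T A /\ is_closed T A).

Definition OCC (X : Type) (T : topology X) : Prop :=
  ~ exists A B C D : X -> Prop,
      nonempty A /\ nonempty B /\ nonempty C /\ nonempty D /\
      disjoint A B /\ disjoint A C /\ disjoint A D /\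
      disjoint B C /\ disjoint B D /\ disjoint C D /\
      is_open T A /\ is_open T B /\ is_closed T C /\ is_closed T D.

(* Main.v *)
Require Import Defs.
From Stdlib Require Import Classical FunctionalExtensionality PropExtensionality.

Lemma open_ext X (T : topology X) (P Q : X -> Prop) :
  (forall x, P x <-> Q x) -> is_open T P -> is_open T Q.
Proof.
  intros H HP. replace Q with P; auto.
  apply functional_extensionality; intro x; apply propositional_extensionality; auto.
Qed.

Lemma closed_ext X (T : topology X) (P Q : X -> Prop) :
  (forall x, P x <-> Q x) -> is_closed T P -> is_closed T Q.
Proof.
  unfold is_closed; intros H; apply open_ext; intro x; rewrite (H x); tauto.
Qed.

Lemma open_or X (T : topology X) (P Q : X -> Prop) :
  is_open T P -> is_open T Q -> is_open T (fun x => P x \/ Q x).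
Proof.
  intros HP HQ.
  pose proof (open_union T (fun W => W = P \/ W = Q)) as H.
  eapply open_ext; [| apply H].
  - intro x; split.
    + intros [W [[-> | ->] Hw]]; auto.
    + intros [Hp|Hq]; [exists P | exists Q]; auto.
  - intros U [-> | ->]; auto.
Qed.

Lemma closed_or X (T : topology X) (P Q : X -> Prop) :
  is_closed T P -> is_closed T Q -> is_closed T (fun x => P x \/ Q x).
Proof.
  unfold is_closed; intros HP HQ.
  eapply open_ext; [| apply (open_inter T _ _ HP HQ)].
  intro x; simpl; tauto.
Qed.

Lemma closed_and X (T : topology X) (P Q : X -> Prop) :
  is_closed T P -> is_closed T Q -> is_closed T (fun x => P x /\ Q x).
Proof.
  unfold is_closed; intros HP HQ.
  eapply open_ext; [| apply (open_or _ T _ _ HP HQ)].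
  intro x; simpl; tauto.
Qed.

Lemma final X (T : topology X) (A B C D : X -> Prop) :
  connected_door_space T ->
  nonempty A -> nonempty B -> nonempty C -> nonempty D ->
  disjoint A B -> disjoint A C -> disjoint A D ->
  disjoint B C -> disjoint B D -> disjoint C D ->
  is_open T (fun x => A x \/ C x) -> is_open T (fun x => B x \/ D x) ->
  is_closed T (fun x => A x \/ D x) -> is_closed T (fun x => B x \/ C x) -> False.
Proof.
  intros Hd [a Ha] [b Hb] [c Hc] [d Hd'] dAB dAC dAD dBC dBD dCD o1 o2 c1 c2.
  destruct (classic (exists x, ~ (A x \/ B x \/ C x \/ D x))) as [Hp | Hf].
  - destruct (Hd (fun x => A x \/ B x \/ C x \/ D x)) as [_ Hn].
    + exists a; auto.
    + exact Hp.
    + apply Hn; split.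
      * eapply open_ext; [| apply (open_or _ T _ _ o1 o2)]; intro x; simpl; tauto.
      * eapply closed_ext; [| apply (closed_or _ T _ _ c1 c2)]; intro x; simpl; tauto.
  - destruct (Hd (fun x => B x \/ D x)) as [_ Hn].
    + exists b; auto.
    + exists a; intros [H|H]; firstorder.
    + apply Hn; split; auto.
      unfold is_closed. eapply open_ext; [| apply o1].
      intro x; split.
      * intros [H|H] [H'|H']; firstorder.
      * intros H. destruct (classic (A x \/ C x)) as [|Hn']; auto.
        exfalso; apply Hf; exists x; tauto.
Qed.

Theorem lemma2 (X : Type) (T : topology X) :
  connected_door_space T -> OCC T.
Proof.
  intros Hd [A [B [C [D [nA [nB [nC [nD [dAB [dAC [dAD [dBC [dBD [dCD
    [oA [oB [cC cD]]]]]]]]]]]]]]]]].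
  destruct nA as [a Ha], nB as [b Hb], nC as [c Hc], nD as [d Hd0].
  assert (door : forall P Q : X -> Prop, (exists x, P x) ->
      (forall x, ~ (P x \/ Q x)) -> False) by (intros; firstorder).
  clear door.
  assert (oc : forall (P Q : X -> Prop) y z, P y -> Q z -> (P z -> False) -> (Q z -> Q z) ->
     forall w, (P w -> False) -> (Q w -> False) -> ~ (P w \/ Q w)) by (intros; tauto).
  clear oc.
  assert (H1 : forall (P Q : X -> Prop) p (R : X -> Prop) r,
      P p -> R r -> ~ P r -> ~ Q r ->
      (is_open T (fun x => P x \/ Q x) \/ is_closed T (fun x => P x \/ Q x))).
  { intros P Q p R r Hp Hr H1 H2.
    destruct (Hd (fun x => P x \/ Q x)) as [H _]; auto.
    - exists p; auto.
    - exists r; tauto. }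
  assert (AC : is_open T (fun x => A x \/ C x) \/ is_closed T (fun x => A x \/ C x)).
  { apply (H1 _ _ a B b); firstorder. }
  assert (AD : is_open T (fun x => A x \/ D x) \/ is_closed T (fun x => A x \/ D x)).
  { apply (H1 _ _ a B b); firstorder. }
  assert (BC : is_open T (fun x => B x \/ C x) \/ is_closed T (fun x => B x \/ C x)).
  { apply (H1 _ _ b A a); firstorder. }
  assert (BD : is_open T (fun x => B x \/ D x) \/ is_closed T (fun x => B x \/ D x)).
  { apply (H1 _ _ b A a); firstorder. }
  assert (Cnot : forall E e, E e -> ~ C e -> is_open T C -> False).
  { intros E e He Hne HoC. destruct (Hd C) as [_ Hn]; [exists c; auto | exists e; auto | tauto]. }
  assert (Dnot : forall E e, E e -> ~ D e -> is_open T D -> False).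
  { intros E e He Hne HoD. destruct (Hd D) as [_ Hn]; [exists d; auto | exists e; auto | tauto]. }
  assert (Anot : is_closed T A -> False).
  { intros HcA. destruct (Hd A) as [_ Hn]; [exists a; auto | exists b; intro; firstorder | tauto]. }
  assert (Bnot : is_closed T B -> False).
  { intros HcB. destruct (Hd B) as [_ Hn]; [exists b; auto | exists a; intro; firstorder | tauto]. }
  assert (C1 : is_open T (fun x => A x \/ C x) -> is_open T (fun x => B x \/ C x) -> False).
  { intros o1 o2. apply (Cnot A a Ha); [intro; firstorder |].
    eapply open_ext; [| apply (open_inter T _ _ o1 o2)]; intro x; simpl; split.
    - intros [[H|H] [H'|H']]; firstorder; exfalso; firstorder.
    - auto. }
  assert (C2 : is_open T (fun x => A x \/ D x) -> is_open T (fun x => B x \/ D x) -> False).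
  { intros o1 o2. apply (Dnot A a Ha); [intro; firstorder |].
    eapply open_ext; [| apply (open_inter T _ _ o1 o2)]; intro x; simpl; split.
    - intros [[H|H] [H'|H']]; firstorder; exfalso; firstorder.
    - auto. }
  assert (C3 : is_closed T (fun x => A x \/ C x) -> is_closed T (fun x => A x \/ D x) -> False).
  { intros o1 o2. apply Anot.
    eapply closed_ext; [| apply (closed_and _ T _ _ o1 o2)]; intro x; simpl; split.
    - intros [[H|H] [H'|H']]; firstorder; exfalso; firstorder.
    - auto. }
  assert (C4 : is_closed T (fun x => B x \/ C x) -> is_closed T (fun x => B x \/ D x) -> False).
  { intros o1 o2. apply Bnot.
    eapply closed_ext; [| apply (closed_and _ T _ _ o1 o2)]; intro x; simpl; split.
    - intros [[H|H] [H'|H']]; firstorder; exfalso; firstorder.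
    - auto. }
  assert (sym : forall (P Q : X -> Prop), disjoint P Q -> disjoint Q P)
    by (unfold disjoint; firstorder).
  destruct AC as [oAC|cAC], AD as [oAD|cAD], BC as [oBC|cBC], BD as [oBD|cBD];
    try tauto.
  - exact (final _ T A B C D Hd (ex_intro _ a Ha) (ex_intro _ b Hb) (ex_intro _ c Hc)
      (ex_intro _ d Hd0) dAB dAC dAD dBC dBD dCD oAC oBD cAD cBC).
  - exact (final _ T A B D C Hd (ex_intro _ a Ha) (ex_intro _ b Hb) (ex_intro _ d Hd0)
      (ex_intro _ c Hc) dAB dAD dAC dBD dBC (sym _ _ dCD) oAD oBC cAC cBD).
Qed.
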